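(* Consider a cellular network with $n$ base stations $\mathcal{N}=\{1,\dots,n\}$, base station $i$ serving a nonempty set $\mathcal{J}_i$ of users (pairwise disjoint), channel gains $g_{kj}>0$, noise power $\sigma^2>0$, and $$f_i(\mathbf{x};\mathbf{r},\mathbf{p})=\sum_{j\in\mathcal{J}_i}\frac{r_{ij}}{\log\Big(1+\frac{p_i g_{ij}}{\sum_{k\ne i} p_k g_{kj} x_k+\sigma^2}\Big)}.$$ Let $\mathbf{d}_{\min}>\mathbf{0}$ and consider Problem P0: $$\min_{\mathbf{p}>\mathbf{0},\ \mathbf{r}>\mathbf{0},\ \mathbf{0}<\mathbf{x}\le\mathbf{1}} \mathbf{x}^T\mathbf{p}\quad\text{s.t.}\quad \mathbf{x}=\mathbf{f}(\mathbf{x};\mathbf{r},\mathbf{p}),\quad \mathbf{r}\ge\mathbf{d}_{\min}.$$ Then the optimal rate vector of Problem P0 satisfies $\mathbf{r}^\star=\mathbf{d}_{\min}$.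
   Context: Vector inequalities are componentwise; $\log$ is natural logarithm. *)

(* Defs.v *)
From HB Require Import structures.
From mathcomp Require Import all_boot all_order all_algebra.
From mathcomp Require Import all_classical all_reals all_analysis.
Set Implicit Arguments. Unset Strict Implicit. Unset Printing Implicit Defensive.
Import Order.TTheory GRing.Theory Num.Theory.
Local Open Scope ring_scope.

(* Base stations are 'I_n; users form a finite type U; [a j] is the base
   station serving user j, so J_i = [set j | a j == i] (pairwise disjoint
   by construction).  Rates r_{ij} (j in J_i) are stored as [r j]. *)

Definition loadf (R : realType) (n : nat) (U : finType) (a : U -> 'I_n)
  (g : 'I_n -> U -> R) (sigma2 : R) (x : 'I_n -> R) (r : U -> R) (p : 'I_n -> R) (i : 'I_n) : R :=
  \sum_(j : U | a j == i)
     r j / ln (1 + p i * g i j /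
                   (\sum_(k < n | k != i) p k * g k j * x k + sigma2)).

Definition P0_feasible (R : realType) (n : nat) (U : finType) (a : U -> 'I_n)
  (g : 'I_n -> U -> R) (sigma2 : R) (dmin : U -> R) (x : 'I_n -> R) (r : U -> R) (p : 'I_n -> R) : Prop :=
  (forall i, 0 < p i) /\ (forall j, 0 < r j) /\
  (forall i, 0 < x i <= 1) /\
  (forall i, x i = loadf a g sigma2 x r p i) /\
  (forall j, dmin j <= r j).

Definition P0_obj (R : realType) (n : nat) (x p : 'I_n -> R) : R :=
  \sum_(i < n) x i * p i.

Definition P0_optimal (R : realType) (n : nat) (U : finType) (a : U -> 'I_n)
  (g : 'I_n -> U -> R) (sigma2 : R) (dmin : U -> R) (x : 'I_n -> R) (r : U -> R) (p : 'I_n -> R) : Prop :=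
  P0_feasible a g sigma2 dmin x r p /\
  forall x' r' p', P0_feasible a g sigma2 dmin x' r' p' ->
    P0_obj x p <= P0_obj x' p'.

(* Main.v *)
Require Import Defs.
From HB Require Import structures.
From mathcomp Require Import all_boot all_order all_algebra.
From mathcomp Require Import all_classical all_reals all_analysis.
Import Order.TTheory GRing.Theory Num.Theory.
Local Open Scope ring_scope.

Section Aux.
Variables (R : realType) (n : nat) (U : finType) (a : U -> 'I_n)
  (g : 'I_n -> U -> R) (sigma2 : R) (p : 'I_n -> R).
Hypotheses (Hg : forall k j, 0 < g k j) (Hsigma : 0 < sigma2) (Hp : forall i, 0 < p i).

Definition Dn (y : 'I_n -> R) i j := \sum_(k < n | k != i) p k * g k j * y k + sigma2.
Definition Ln (y : 'I_n -> R) i j := ln (1 + p i * g i j / Dn y i j).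

Lemma Dn_pos y i j : (forall k, 0 <= y k) -> 0 < Dn y i j.
Proof.
move=> Hy; rewrite /Dn; apply: ltr_wpDl => //.
apply: sumr_ge0 => k _; apply: mulr_ge0 => //; apply: mulr_ge0; exact: ltW.
Qed.

Lemma arg_pos y i j : (forall k, 0 <= y k) -> 0 < p i * g i j / Dn y i j.
Proof.
move=> Hy; apply: divr_gt0; [exact: mulr_gt0 | exact: Dn_pos].
Qed.

Lemma Ln_pos y i j : (forall k, 0 <= y k) -> 0 < Ln y i j.
Proof.
move=> Hy; apply: ln_gt0; rewrite ltrDl; exact: arg_pos.
Qed.

Lemma Ln_anti y z i j : (forall k, 0 <= y k) -> (forall k, y k <= z k) ->
  Ln z i j <= Ln y i j.
Proof.
move=> Hy Hyz.
have Hz : forall k, 0 <= z k by move=> k; exact: le_trans (Hy k) (Hyz k).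
rewrite /Ln ler_ln; first last.
- by rewrite posrE; apply: ltr_wpDr => //; exact: ltW (arg_pos _ i j Hy).
- by rewrite posrE; apply: ltr_wpDr => //; exact: ltW (arg_pos _ i j Hz).
rewrite lerD2l; apply: ler_wpM2l; first by apply: ltW; exact: mulr_gt0.
rewrite lef_pV2 ?posrE ?Dn_pos //.
rewrite /Dn lerD2r; apply: ler_sum => k _; apply: ler_wpM2l => //.
by apply: mulr_ge0; exact: ltW.
Qed.

Lemma loadfE y rr i : loadf a g sigma2 y rr p i = \sum_(j : U | a j == i) rr j / Ln y i j.
Proof. by []. Qed.

Lemma f_mono y z rr i : (forall j, 0 <= rr j) -> (forall k, 0 <= y k) ->
  (forall k, y k <= z k) -> loadf a g sigma2 y rr p i <= loadf a g sigma2 z rr p i.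
Proof.
move=> Hr Hy Hyz.
have Hz : forall k, 0 <= z k by move=> k; exact: le_trans (Hy k) (Hyz k).
rewrite !loadfE; apply: ler_sum => j _; apply: ler_wpM2l => //.
rewrite lef_pV2 ?posrE ?Ln_pos //; exact: Ln_anti.
Qed.

Lemma f_pos y rr i : (exists j, a j = i) -> (forall j, 0 < rr j) -> (forall k, 0 <= y k) ->
  0 < loadf a g sigma2 y rr p i.
Proof.
move=> [j0 Hj0] Hr Hy; rewrite loadfE.
rewrite (bigD1 j0) /=; last by rewrite Hj0.
apply: ltr_pwDl; first by apply: divr_gt0 => //; exact: Ln_pos.
apply: sumr_ge0 => j _; apply: ltW; apply: divr_gt0 => //; exact: Ln_pos.
Qed.

End Aux.

Theorem lemma7 (R : realType) (n : nat) (U : finType) (a : U -> 'I_n)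
  (g : 'I_n -> U -> R) (sigma2 : R) (dmin : U -> R)
  (Hnonempty : forall i : 'I_n, exists j : U, a j = i)
  (Hg : forall k j, 0 < g k j) (Hsigma : 0 < sigma2)
  (Hdmin : forall j, 0 < dmin j)
  (x : 'I_n -> R) (r : U -> R) (p : 'I_n -> R) :
  P0_optimal a g sigma2 dmin x r p -> r = dmin.
Proof.
move=> [[Hp [Hr [Hx [Hfix Hrd]]]] Hopt].
apply/funext => j0; apply/eqP; rewrite eq_le Hrd andbT; rewrite leNgt; apply/negP => Hlt.
have Hx0 : forall k, 0 <= x k by move=> k; case/andP: (Hx k) => /ltW.
have Hdm0 : forall j, 0 <= dmin j by move=> j; exact: ltW.
pose F y := loadf a g sigma2 y dmin p.
have FleX : forall i, F x i <= x i.
  move=> i; rewrite [leRHS]Hfix /F !loadfE; apply: ler_sum => j _.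
  apply: ler_wpM2r => //; apply: ltW; rewrite invr_gt0; exact: Ln_pos.
pose S := fun y : 'I_n -> R => (forall k, 0 <= y k <= x k) /\ (forall i, F y i <= y i).
have Sx : S x by split => // k; rewrite lexx Hx0.
pose xs i := inf [set y i | y in S].
have nonemp : forall i, ([set y i | y in S] !=set0)%classic.
  by move=> i; exists (x i); exists x.
have lbnd : forall i, has_lbound [set y i | y in S].
  by move=> i; exists 0 => _ [y [Hy _] <-]; case/andP: (Hy i).
have xs_le : forall y, S y -> forall i, xs i <= y i.
  by move=> y Sy i; apply: (ge_inf (lbnd i)); exists y.
have xs_ge0 : forall i, 0 <= xs i.
  move=> i; apply: lb_le_inf => // _ [y [Hy _] <-]; by case/andP: (Hy i).
have xs_lex : forall i, xs i <= x i by move=> i; exact: xs_le.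
have Fxs_le : forall i, F xs i <= xs i.
  move=> i; apply: lb_le_inf => // _ [y Sy <-].
  apply: le_trans (proj2 Sy i).
  apply: f_mono => //; by move=> k; exact: xs_le.
have SFxs : S (F xs).
  split.
    move=> k; rewrite (le_trans (Fxs_le k) (xs_lex k)) andbT.
    apply: ltW; exact: f_pos.
  move=> i; apply: f_mono => //.
  by move=> k; apply: ltW; exact: f_pos.
have fixxs : forall i, xs i = F xs i.
  by move=> i; apply/eqP; rewrite eq_le Fxs_le xs_le.
pose i0 := a j0.
have strict : xs i0 < x i0.
  rewrite fixxs.
  have H1 : F xs i0 <= F x i0 by exact: f_mono.
  apply: le_lt_trans H1 _.
  rewrite [ltRHS]Hfix /F !loadfE.
  rewrite (bigD1 j0) //= [ltRHS](bigD1 j0) //=.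
  have LP : forall j, 0 < (Ln R n U g sigma2 p x i0 j)^-1 by move=> j; rewrite invr_gt0; exact: Ln_pos.
  have A : dmin j0 / Ln R n U g sigma2 p x i0 j0 < r j0 / Ln R n U g sigma2 p x i0 j0.
    by rewrite ltr_pM2r.
  have B : \sum_(i | (a i == i0) && (i != j0)) dmin i / Ln R n U g sigma2 p x i0 i <=
           \sum_(i | (a i == i0) && (i != j0)) r i / Ln R n U g sigma2 p x i0 i.
    by apply: ler_sum => j _; apply: ler_wpM2r => //; apply: ltW.
  exact: ltr_leD A B.
have feas : P0_feasible a g sigma2 dmin xs dmin p.
  split => //; split => //; split.
    move=> i; rewrite (le_trans (xs_lex i)); last by case/andP: (Hx i).
    by rewrite andbT fixxs; exact: f_pos.
  by split => // j.
have Hle := Hopt _ _ _ feas.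
suff : P0_obj xs p < P0_obj x p by rewrite ltNge Hle.
rewrite /P0_obj (bigD1 i0) // [ltRHS](bigD1 i0) //.
have A : xs i0 * p i0 < x i0 * p i0 by rewrite ltr_pM2r.
have B : \sum_(i < n | i != i0) xs i * p i <= \sum_(i < n | i != i0) x i * p i.
  by apply: ler_sum => i _; apply: ler_wpM2r => //; exact: ltW.
exact: ltr_leD A B.
Qed.
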